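(* Let $\lambda\ge\omega_3$ be a cardinal and let $F:[\lambda]^2\to\omega_1$ be an $\omega_1$-strongly unbounded function on $\lambda$. Then the forcing poset $\mathcal P=\langle P,\le\rangle$ defined in the context (using this $F$) satisfies the countable chain condition.
   Context: A function $F:[\lambda]^2\to\omega_1$ is $\omega_1$-strongly unbounded on $\lambda$ if for every ordinal $\delta<\omega_1$, every finite cardinal $\nu<\omega$ and every family $A\subseteq[\lambda]^\nu$ of pairwise disjoint sets with $|A|=\omega_1$, there are distinct $a,b\in A$ such that $F\{\alpha,\beta\}>\delta$ for all $\alpha\in a$, $\beta\in b$. For $s=\langle\alpha,\zeta\rangle$ write $\pi(s)=\alpha$, $\rho(s)=\zeta$. Let $T=(\omega_1\times\omega)\cup(\{\omega_1,\omega_1+1\}\times\lambda)$, with $T_\alpha=\{\alpha\}\times\omega$ for $\alpha<\omega_1$, $T_{\omega_1}=\{\omega_1\}\times\lambda$, $T_{\omega_1+1}=\{\omega_1+1\}\times\lambda$, and $t_\xi=\langle\omega_1+1,\xi\rangle$ for $\xi<\lambda$. Let $\mathbb B=\{S\}\cup\lambda$ (where $S$ is a new symbol), $\mathbb B_S=\omega_1\times\omega$ and $\mathbb B_\zeta=\{\omega_1\}\times[\omega\cdot\zeta,\omega\cdot\zeta+\omega)\cup\{t_\zeta\}$ for $\zeta<\lambda$; these partition $T$, and $\pi_B:T\to\mathbb B$ is defined by $x\in\mathbb B_{\pi_B(x)}$. $P$ consists of all triples $p=\langle X,\preceq,i\rangle$ such that: (P1) $X\in[T]^{<\omega}$; (P2)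 $\preceq$ is a partial order on $X$ such that $x\prec y$ implies $\pi(x)<\pi(y)$; (P3) if $X\cap\mathbb B_\zeta\ne\emptyset$ for some $\zeta<\lambda$, then $t_\zeta\in X$; (P4) if $x\in X\cap T_{\omega_1}\cap\mathbb B_\zeta$ for $\zeta<\lambda$, then $x\prec t_\zeta$ and $x\not\prec t_\xi$ for all $\xi\ne\zeta$ (with $t_\xi\in X$); (P5) if $s\neq t$ lie in the same $\mathbb B_b$ ($b\in\mathbb B$) with $\pi(s)=\pi(t)$, then $i\{s,t\}=\emptyset$; (P6) if $t\in X\cap T_{\alpha+1}$ for some $\alpha\le\omega_1$ and $s\prec t$, then there is $v\in X\cap T_\alpha$ with $s\preceq v\prec t$; (P7) $i:[X]^2\to[X]^{<\omega}$ satisfies $i\{x,y\}=\{x\}$ whenever $x\prec y$, and whenever $x,y\in X$ are $\preceq$-incomparable: (a) for all $u\in X$, ($u\preceq x$ and $u\preceq y$) iff $u\preceq v$ for some $v\in i\{x,y\}$; (b) if $x,y\in T_{\omega_1}\cup T_{\omega_1+1}$ and $\pi_B(x)\ne\pi_B(y)$, then $\pi[i\{x,y\}]\subseteq F\{\pi_B(x),\pi_B(y)\}$ (the ordinal $F\{\cdot,\cdot\}<\omega_1$ viewed as the set of smaller ordinals). Order: $\langle X',\preceq',i'\rangle\le\langle X,\preceq,i\rangle$ iff $X\subseteq X'$, $\preceq=\preceq'\cap(X\times X)$, and $i\subseteq i'$. *)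

(* Defs.v *)
From Stdlib Require Import List.
Import ListNotations.
Set Implicit Arguments.

Definition injects (X Y : Type) : Prop :=
  exists f : X -> Y, forall a b, f a = f b -> a = b.

Definition strict_wellorder (B : Type) (lt : B -> B -> Prop) : Prop :=
  (forall a, ~ lt a a) /\
  (forall a b c, lt a b -> lt b c -> lt a c) /\
  (forall a b, lt a b \/ a = b \/ lt b a) /\
  well_founded lt.

(** (B, lt) is (order-isomorphic to) the initial ordinal of the cardinal
    successor of |A|: it is well ordered, |B| > |A|, and every proper initial
    segment has size <= |A|. *)
Definition next_initial_ordinal (A B : Type) (lt : B -> B -> Prop) : Prop :=
  strict_wellorder lt /\ ~ injects B A /\
  (forall b, injects {c : B | lt c b} A).

Definition is_omega1 (W : Type) (lt : W -> W -> Prop) : Prop :=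
  next_initial_ordinal nat lt.

Definition card_ge_omega3 (W1 : Type) (lt1 : W1 -> W1 -> Prop) (L : Type) : Prop :=
  exists (W2 : Type) (lt2 : W2 -> W2 -> Prop) (W3 : Type) (lt3 : W3 -> W3 -> Prop),
    next_initial_ordinal W1 lt2 /\ next_initial_ordinal W2 lt3 /\ injects W3 L.

(** omega_1-strongly unbounded; a family A of size omega_1 of pairwise disjoint
    nu-element subsets of L is given by an injective enumeration g : W -> [L]^nu
    (each set a duplicate-free list of length nu). *)
Definition strongly_unbounded (W : Type) (ltW : W -> W -> Prop) (L : Type)
    (F : L -> L -> W) : Prop :=
  forall (delta : W) (nu : nat) (g : W -> list L),
    (forall xi, NoDup (g xi) /\ length (g xi) = nu) ->
    (forall xi eta, (forall a, In a (g xi) <-> In a (g eta)) -> xi = eta) ->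
    (forall xi eta, xi <> eta -> forall a, In a (g xi) -> ~ In a (g eta)) ->
    exists xi eta, xi <> eta /\
      forall a b, In a (g xi) -> In b (g eta) -> ltW delta (F a b).

Section Forcing.
Variables (W : Type) (ltW : W -> W -> Prop) (L : Type) (F : L -> L -> W).

(** The tree T:  TL a n = <a, n> (a < omega_1, n < omega);
    TM z n = <omega_1, omega*z + n>;  TT z = t_z = <omega_1 + 1, z>. *)
Inductive T : Type :=
| TL (a : W) (n : nat)
| TM (z : L) (n : nat)
| TT (z : L).

(** levels: ordinals <= omega_1 + 1 *)
Inductive Lev : Type := LW (a : W) | Lom1 | Lom1p1.

Definition lev (x : T) : Lev :=
  match x with TL a _ => LW a | TM _ _ => Lom1 | TT _ => Lom1p1 end.

Definition ltLev (a b : Lev) : Prop :=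
  match a, b with
  | LW a, LW b => ltW a b
  | LW _, Lom1 => True
  | LW _, Lom1p1 => True
  | Lom1, Lom1p1 => True
  | _, _ => False
  end.

Definition is_succ_lev (a b : Lev) : Prop :=
  ltLev a b /\ forall c, ~ (ltLev a c /\ ltLev c b).

Definition lev_below (l : Lev) (d : W) : Prop :=
  match l with LW a => ltW a d | _ => False end.

Inductive Bidx : Type := BS | BZ (z : L).

Definition piB (x : T) : Bidx :=
  match x with TL _ _ => BS | TM z _ => BZ z | TT z => BZ z end.

(** a triple <X, ⪯, i>; finite sets are lists (up to having the same members) *)
Record cond : Type := mkCond {
  cX : list T;
  cR : T -> T -> Prop;
  cI : T -> T -> list T }.

Definition sameset (s t : list T) : Prop := forall x, In x s <-> In x t.

Definition strictR (p : cond) (x y : T) : Prop := cR p x y /\ x <> y.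

Definition in_P (p : cond) : Prop :=
  (forall x y, cR p x y -> In x (cX p) /\ In y (cX p)) /\
  (forall x, In x (cX p) -> cR p x x) /\
  (forall x y, cR p x y -> cR p y x -> x = y) /\
  (forall x y z, cR p x y -> cR p y z -> cR p x z) /\
  (forall x y, strictR p x y -> ltLev (lev x) (lev y)) /\
  (forall x z, In x (cX p) -> piB x = BZ z -> In (TT z) (cX p)) /\
  (forall z n, In (TM z n) (cX p) ->
     strictR p (TM z n) (TT z) /\
     forall xi, xi <> z -> In (TT xi) (cX p) -> ~ strictR p (TM z n) (TT xi)) /\
  (forall s t, In s (cX p) -> In t (cX p) -> s <> t -> piB s = piB t ->
     lev s = lev t -> forall u, ~ In u (cI p s t)) /\
  (forall t s a, In t (cX p) -> is_succ_lev a (lev t) -> strictR p s t ->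
     exists v, In v (cX p) /\ lev v = a /\ cR p s v /\ strictR p v t) /\
  (forall x y, In x (cX p) -> In y (cX p) -> x <> y ->
     sameset (cI p x y) (cI p y x) /\ (forall u, In u (cI p x y) -> In u (cX p))) /\
  (forall x y, strictR p x y -> sameset (cI p x y) [x]) /\
  (forall x y, In x (cX p) -> In y (cX p) -> ~ cR p x y -> ~ cR p y x ->
     (forall u, In u (cX p) ->
        (cR p u x /\ cR p u y <-> exists v, In v (cI p x y) /\ cR p u v)) /\
     (forall z xi, (lev x = Lom1 \/ lev x = Lom1p1) ->
        (lev y = Lom1 \/ lev y = Lom1p1) ->
        piB x = BZ z -> piB y = BZ xi -> z <> xi ->
        forall v, In v (cI p x y) -> lev_below (lev v) (F z xi))).

Definition extends (q p : cond) : Prop :=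
  (forall x, In x (cX p) -> In x (cX q)) /\
  (forall x y, In x (cX p) -> In y (cX p) -> (cR p x y <-> cR q x y)) /\
  (forall x y, In x (cX p) -> In y (cX p) -> x <> y ->
     sameset (cI q x y) (cI p x y)).

Definition compatible (p q : cond) : Prop :=
  exists r, in_P r /\ extends r p /\ extends r q.

Definition ccc : Prop :=
  forall A : cond -> Prop,
    (forall p, A p -> in_P p) ->
    (forall p q, A p -> A q -> p <> q -> ~ compatible p q) ->
    exists f : cond -> nat, forall p q, A p -> A q -> f p = f q -> p = q.

End Forcing.

(* Main.v *)
Require Import Defs.
From Stdlib Require Import List Arith Lia Classical ClassicalEpsilon FunctionalExtensionality Cantor.
Import ListNotations.
Set Implicit Arguments.


Definition cnt {X : Type} (C : X -> Prop) : Prop :=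
  exists g : nat -> option X, forall x, C x -> exists n, g n = Some x.
Definition unc {X : Type} (C : X -> Prop) : Prop := ~ cnt C.

Definition cid' {A : Type} {P : A -> Prop} (H : exists x, P x) : {x | P x} :=
  constructive_indefinite_description P H.

Lemma cnt_sub X (C D : X -> Prop) : (forall x, C x -> D x) -> cnt D -> cnt C.
Proof. intros H [g Hg]. exists g. intros x Cx. apply Hg, H, Cx. Qed.

Lemma cnt_empty X (C : X -> Prop) : (forall x, ~ C x) -> cnt C.
Proof. intros H. exists (fun _ => None). intros x Cx. exfalso. eapply H; eauto. Qed.

Lemma cnt_union_nat X (C : nat -> X -> Prop) :
  (forall n, cnt (C n)) -> cnt (fun x => exists n, C n x).
Proof.
  intros H.
  pose (G := fun n => proj1_sig (cid' (H n))).
  exists (fun k => G (fst (of_nat k)) (snd (of_nat k))).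
  intros x [n Hn].
  destruct (proj2_sig (cid' (H n)) x Hn) as [m Hm].
  exists (to_nat (n, m)). rewrite cancel_of_to. simpl. exact Hm.
Qed.

Lemma cnt_union2 X (C D : X -> Prop) : cnt C -> cnt D -> cnt (fun x => C x \/ D x).
Proof.
  intros HC HD.
  apply cnt_sub with (D := fun x => exists n, (fun n x => match n with 0 => C x | _ => D x end) n x).
  - intros x [Cx|Dx]. exists 0; auto. exists 1; auto.
  - apply cnt_union_nat. intros [|n]; auto.
Qed.

Lemma cnt_image X Y (C : X -> Prop) (f : X -> Y) : cnt C -> cnt (fun y => exists x, C x /\ f x = y).
Proof.
  intros [g Hg]. exists (fun n => option_map f (g n)).
  intros y [x [Cx <-]]. destruct (Hg x Cx) as [n Hn]. exists n. rewrite Hn. reflexivity.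
Qed.

Lemma cnt_prod X Y (A : X -> Prop) (B : Y -> Prop) :
  cnt A -> cnt B -> cnt (fun p : X * Y => A (fst p) /\ B (snd p)).
Proof.
  intros [g Hg] [h Hh].
  exists (fun k => match g (fst (of_nat k)), h (snd (of_nat k)) with
                   | Some a, Some b => Some (a, b) | _, _ => None end).
  intros [a b] [Ha Hb]. destruct (Hg a Ha) as [n Hn]. destruct (Hh b Hb) as [m Hm].
  exists (to_nat (n, m)). rewrite cancel_of_to. simpl. rewrite Hn, Hm. reflexivity.
Qed.

Lemma cnt_list_len X (A : X -> Prop) : cnt A -> forall m,
  cnt (fun l => length l = m /\ forall x, In x l -> A x).
Proof.
  intros HA. induction m.
  - exists (fun _ => Some []). intros l [Hl _]. exists 0. destruct l; simpl in *; try discriminate. reflexivity.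
  - apply cnt_sub with (D := fun l => exists p, (A (fst p) /\ (fun l => length l = m /\ forall x, In x l -> A x) (snd p)) /\ fst p :: snd p = l).
    + intros [|a l] [Hl Hin]; simpl in Hl; try discriminate.
      exists (a, l). simpl. split; [split; [apply Hin; simpl; auto | split; [lia| intros x Hx; apply Hin; simpl; auto]] | reflexivity].
    + apply cnt_image with (f := fun p => fst p :: snd p). exact (@cnt_prod X (list X) A (fun l => length l = m /\ forall x, In x l -> A x) HA IHm).
Qed.

Lemma cnt_list X (A : X -> Prop) : cnt A -> cnt (fun l => forall x, In x l -> A x).
Proof.
  intros HA.
  apply cnt_sub with (D := fun l => exists m, length l = m /\ forall x, In x l -> A x).
  - intros l Hl. exists (length l). auto.
  - apply cnt_union_nat. intros m. apply cnt_list_len. auto.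
Qed.

Lemma cnt_all_nat : cnt (fun _ : nat => True).
Proof. exists Some. intros x _. exists x. reflexivity. Qed.

Lemma cnt_inlist X (l : list X) : cnt (fun x => In x l).
Proof.
  exists (fun n => nth_error l n). intros x Hx.
  destruct (In_nth_error l x Hx) as [n Hn]. exists n. auto.
Qed.

Lemma cnt_all_bool : cnt (fun _ : bool => True).
Proof. apply cnt_sub with (D := fun b => In b [true; false]). intros [|] _; simpl; auto. apply cnt_inlist. Qed.

Lemma cnt_to_inj X (C : X -> Prop) : cnt C ->
  exists f : X -> nat, forall a b, C a -> C b -> f a = f b -> a = b.
Proof.
  intros [g Hg].
  exists (fun x => match excluded_middle_informative (exists n, g n = Some x) with
                   | left H => proj1_sig (cid' H) | right _ => 0 end).
  intros a b Ca Cb.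
  destruct (excluded_middle_informative (exists n, g n = Some a)) as [Ha|Ha]; [|exfalso; auto].
  destruct (excluded_middle_informative (exists n, g n = Some b)) as [Hb|Hb]; [|exfalso; auto].
  intros E. pose proof (proj2_sig (cid' Ha)) as E1. pose proof (proj2_sig (cid' Hb)) as E2.
  simpl in *. rewrite E in E1. rewrite E1 in E2. injection E2. auto.
Qed.

Lemma cnt_of_inj X (C : X -> Prop) (f : X -> nat) :
  (forall a b, C a -> C b -> f a = f b -> a = b) -> cnt C.
Proof.
  intros Hf.
  exists (fun n => match excluded_middle_informative (exists x, C x /\ f x = n) with
                   | left H => Some (proj1_sig (cid' H)) | right _ => None end).
  intros x Cx. exists (f x).
  destruct (excluded_middle_informative (exists y, C y /\ f y = f x)) as [H|H].
  - destruct (proj2_sig (cid' H)) as [H1 H2]. f_equal. apply Hf; auto.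
  - exfalso. apply H. eauto.
Qed.

Lemma unc_ex X (S : X -> Prop) : unc S -> exists a, S a.
Proof. intros H. apply NNPP. intros N. apply H. apply cnt_empty. intros x Sx. apply N. eauto. Qed.

Lemma unc_two X (S : X -> Prop) (a : X) : unc S -> exists b, S b /\ b <> a.
Proof.
  intros H. apply NNPP. intros N. apply H.
  apply cnt_sub with (D := fun x => In x [a]). 2: apply cnt_inlist.
  intros x Sx. left. apply NNPP. intros N2. apply N. exists x. auto.
Qed.

Lemma unc_mono X (S T : X -> Prop) : (forall x, S x -> T x) -> unc S -> unc T.
Proof. intros H U C. apply U. eapply cnt_sub; eauto. Qed.

Lemma PH X Y (S : X -> Prop) (c : X -> Y) :
  unc S -> cnt (fun y => exists x, S x /\ c x = y) ->
  exists x0, S x0 /\ unc (fun x => S x /\ c x = c x0).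
Proof.
  intros U [g Hg]. apply NNPP. intros N. apply U.
  apply cnt_sub with (D := fun x => exists n, (fun n x => S x /\ g n = Some (c x)) n x).
  - intros x Sx. destruct (Hg (c x)) as [n Hn]; eauto.
  - apply cnt_union_nat. intros n.
    destruct (classic (exists x0, S x0 /\ g n = Some (c x0))) as [[x0 [S0 E0]]|NE].
    + apply NNPP. intros N2. apply N. exists x0. split; auto.
      intros C2. apply N2. eapply cnt_sub; [|exact C2].
      intros x [Sx E]. split; auto. rewrite E0 in E. injection E; auto.
    + apply cnt_empty. intros x Hx. apply NE. eauto.
Qed.

Section Om.
Variables (W : Type) (ltW : W -> W -> Prop).
Hypothesis Hw : is_omega1 ltW.

Lemma W_unc : unc (fun _ : W => True).
Proof.
  intros C. destruct (cnt_to_inj C) as [f Hf].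
  destruct Hw as [_ [N _]]. apply N. exists f. intros a b E. apply Hf; auto.
Qed.

Lemma seg_cnt (w : W) : cnt (fun c => ltW c w).
Proof.
  destruct Hw as [_ [_ H]]. destruct (H w) as [f Hf].
  exists (fun n => match excluded_middle_informative (exists c, f c = n) with
                   | left E => Some (proj1_sig (proj1_sig (cid' E))) | right _ => None end).
  intros c Hc. exists (f (exist _ c Hc)).
  destruct (excluded_middle_informative (exists d, f d = f (exist _ c Hc))) as [E|E].
  - pose proof (proj2_sig (cid' E)) as E1. simpl in E1. apply Hf in E1. rewrite E1. reflexivity.
  - exfalso. apply E. eauto.
Qed.

Definition leW (a b : W) := ltW a b \/ a = b.

Lemma leW_cnt (w : W) : cnt (fun c => leW c w).
Proof.
  apply cnt_sub with (D := fun c => ltW c w \/ In c [w]).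
  - intros c [H|H]; auto. right. left. auto.
  - apply cnt_union2. apply seg_cnt. apply cnt_inlist.
Qed.

Lemma lt_trans a b c : ltW a b -> ltW b c -> ltW a c.
Proof. destruct Hw as [[_ [H _]] _]. eauto. Qed.
Lemma lt_irrefl a : ~ ltW a a.
Proof. destruct Hw as [[H _] _]. auto. Qed.
Lemma lt_tri a b : ltW a b \/ a = b \/ ltW b a.
Proof. destruct Hw as [[_ [_ [H _]]] _]. auto. Qed.
Lemma lt_wf : well_founded ltW.
Proof. destruct Hw as [[_ [_ [_ H]]] _]. auto. Qed.

Lemma le_lt_trans a b c : leW a b -> ltW b c -> ltW a c.
Proof. intros [H|<-] H2; auto. eapply lt_trans; eauto. Qed.
Lemma le_trans a b c : leW a b -> leW b c -> leW a c.
Proof. intros [H|<-] [H2|<-]; unfold leW; auto. left; eapply lt_trans; eauto. Qed.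

Lemma W_inh : exists w : W, True.
Proof. destruct (unc_ex W_unc) as [w _]. eauto. Qed.

Lemma upper_bound (l : list W) : exists m, forall a, In a l -> leW a m.
Proof.
  induction l as [|a l [m Hm]].
  - destruct W_inh as [w _]. exists w. intros a [].
  - destruct (lt_tri a m) as [H|[H|H]].
    + exists m. intros b [<-|Hb]; auto. left; auto.
    + exists m. intros b [<-|Hb]; auto. right; auto.
    + exists a. intros b [<-|Hb]. right; auto. apply le_trans with m; auto. left; auto.
Qed.

Lemma build X (S : X -> Prop) (Comp : X -> X -> Prop) :
  (forall C : X -> Prop, cnt C -> exists x, S x /\ ~ C x /\ forall c, C c -> Comp c x) ->
  exists e : W -> X, (forall w, S (e w)) /\
     (forall v w, ltW v w -> e v <> e w /\ Comp (e v) (e w)).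
Proof.
  intros Hyp.
  assert (Hc : forall w (rec : forall v, ltW v w -> X),
             cnt (fun x => exists v (h : ltW v w), rec v h = x)).
  { intros w rec. destruct (seg_cnt w) as [g Hg].
    exists (fun n => match g n with
                     | Some v => match excluded_middle_informative (ltW v w) with
                                 | left h => Some (rec v h) | right _ => None end
                     | None => None end).
    intros x [v [h <-]]. destruct (Hg v h) as [n Hn]. exists n. rewrite Hn.
    destruct (excluded_middle_informative (ltW v w)) as [h'|h']; [|contradiction].
    f_equal. f_equal. apply proof_irrelevance. }
  pose (Fn := fun w (rec : forall v, ltW v w -> X) => proj1_sig (cid' (Hyp _ (Hc w rec)))).
  pose (e := Fix lt_wf (fun _ => X) Fn).
  assert (Ee : forall w, e w = Fn w (fun v _ => e v)).
  { intros w. unfold e. refine (Fix_eq lt_wf (fun _ => X) Fn _ w). intros x f g Hfg.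
    assert (f = g) as ->. { apply functional_extensionality_dep. intros y.
      apply functional_extensionality_dep. intros p. apply Hfg. }
    reflexivity. }
  exists e. split.
  - intros w. rewrite Ee. unfold Fn. destruct (proj2_sig (cid' (Hyp _ (Hc w (fun v _ => e v))))) as [H _]. exact H.
  - intros v w Hvw. rewrite (Ee w). unfold Fn.
    destruct (proj2_sig (cid' (Hyp _ (Hc w (fun v _ => e v))))) as [_ [H1 H2]].
    split.
    + intros E. apply H1. exists v, Hvw. exact E.
    + apply H2. exists v, Hvw. reflexivity.
Qed.

Lemma image_unc X (e : W -> X) : (forall v w, ltW v w -> e v <> e w) ->
  unc (fun x => exists w, e w = x).
Proof.
  intros He C. destruct (cnt_to_inj C) as [f Hf].
  apply W_unc. apply cnt_of_inj with (f := fun w => f (e w)).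
  intros a b _ _ E. apply Hf in E; eauto.
  destruct (lt_tri a b) as [H|[H|H]]; auto; exfalso; eapply He; eauto.
Qed.

Lemma enum_unc X (S : X -> Prop) : unc S ->
  exists e : W -> X, (forall w, S (e w)) /\ (forall v w, v <> w -> e v <> e w).
Proof.
  intros U. destruct (@build X S (fun _ _ => True)) as [e [H1 H2]].
  - intros C HC. apply NNPP. intros N. apply U.
    eapply cnt_sub; [|exact HC]. intros x Sx. apply NNPP. intros N2. apply N. eauto.
  - exists e. split; auto. intros v w Hvw.
    destruct (lt_tri v w) as [H|[H|H]]. apply H2; auto. contradiction.
    intros E. symmetry in E. revert E. apply H2; auto.
Qed.

End Om.


Section Delta.
Variables (W : Type) (ltW : W -> W -> Prop).
Hypothesis Hw : is_omega1 ltW.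

Lemma delta_disj X Y (S : X -> Prop) (tg : X -> list Y) :
  (forall t, cnt (fun p => S p /\ In t (tg p))) -> unc S ->
  exists S', (forall x, S' x -> S x) /\ unc S' /\
   (forall p q, S' p -> S' q -> p <> q -> forall y, In y (tg p) -> In y (tg q) -> False).
Proof.
  intros Ht U.
  destruct (@build W ltW Hw X S (fun c x => forall y, In y (tg c) -> In y (tg x) -> False)) as [e [He1 He2]].
  - intros C [g Hg].
    set (B := fun x => C x \/ exists n k, (fun n k x => S x /\ exists c y, g n = Some c /\
                         nth_error (tg c) k = Some y /\ In y (tg x)) n k x).
    assert (HB : cnt B).
    { apply cnt_union2. exists g; auto.
      apply cnt_union_nat. intros n. apply cnt_union_nat. intros k.
      destruct (classic (exists c y, g n = Some c /\ nth_error (tg c) k = Some y)) as [[c [y [E1 E2]]]|NE].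
      - eapply cnt_sub; [|exact (Ht y)]. intros x [Sx [c' [y' [E1' [E2' I]]]]].
        rewrite E1 in E1'. injection E1' as <-. rewrite E2 in E2'. injection E2' as <-. auto.
      - apply cnt_empty. intros x [_ [c [y [E1 [E2 _]]]]]. apply NE. eauto. }
    apply NNPP. intros N. apply U. eapply cnt_sub; [|exact HB].
    intros x Sx. apply NNPP. intros NB. apply N. exists x. split; auto. split.
    + intros Cx. apply NB. left; auto.
    + intros c Cc y Hy1 Hy2. apply NB. right.
      destruct (Hg c Cc) as [n Hn]. destruct (In_nth_error _ _ Hy1) as [k Hk].
      exists n, k. split; auto. exists c, y. auto.
  - exists (fun x => exists w, e w = x). split; [|split].
    + intros x [w <-]; auto.
    + apply image_unc with (1 := Hw). intros v w H. apply He2; auto.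
    + intros p q [v <-] [w <-] Hne y H1 H2.
      destruct (lt_tri Hw v w) as [H|[H|H]].
      * eapply (proj2 (He2 v w H)); eauto.
      * subst; auto.
      * eapply (proj2 (He2 w v H)); eauto.
Qed.

Lemma filter_len_lt Y (f : Y -> bool) (l : list Y) t :
  In t l -> f t = false -> length (filter f l) < length l.
Proof.
  induction l as [|a l IH]; simpl; intros Hin Hf; [contradiction|].
  assert (length (filter f l) <= length l).
  { clear. induction l; simpl; auto. destruct (f a); simpl; lia. }
  destruct Hin as [<-|Hin].
  - rewrite Hf. lia.
  - destruct (f a); simpl; specialize (IH Hin Hf); lia.
Qed.

Definition neqb {Y} (t y : Y) : bool :=
  if excluded_middle_informative (y = t) then false else true.

Lemma caseB X Y (S : X -> Prop) (tg : X -> list Y) :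
  ~ (exists t, unc (fun p => S p /\ In t (tg p))) -> unc S ->
  exists S' Rt, (forall x, S' x -> S x) /\ unc S' /\
   (forall p q, S' p -> S' q -> p <> q -> forall y, (In y (tg p) /\ In y (tg q)) <-> In y Rt).
Proof.
  intros NA U. destruct (@delta_disj X Y S tg) as [S' [H1 [H2 H3]]]; auto.
  - intros t; apply NNPP; intros N; apply NA; eauto.
  - exists S', []. split; auto. split; auto. intros p q Sp Sq Hne y; simpl; split.
    + intros [A B]; eapply H3; eauto.
    + intros [].
Qed.

Lemma delta_n X Y n : forall (S : X -> Prop) (tg : X -> list Y),
  unc S -> (forall p, S p -> length (tg p) <= n) ->
  exists S' Rt, (forall x, S' x -> S x) /\ unc S' /\
   (forall p q, S' p -> S' q -> p <> q -> forall y, (In y (tg p) /\ In y (tg q)) <-> In y Rt).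
Proof.
  induction n as [|n IH]; intros S tg U Hl;
  (destruct (classic (exists t, unc (fun p => S p /\ In t (tg p)))) as [[t Ut]|NA];
   [|apply caseB; auto]).
  - exfalso. destruct (unc_ex Ut) as [p [Sp Ip]]. specialize (Hl p Sp).
    destruct (tg p); simpl in *; [contradiction | lia].
  - destruct (IH (fun p => S p /\ In t (tg p)) (fun p => filter (neqb t) (tg p)) Ut) as [S' [Rt [H1 [H2 H3]]]].
    { intros p [Sp Ip]. assert (length (filter (neqb t) (tg p)) < length (tg p)).
      { apply filter_len_lt with t; auto. unfold neqb.
        destruct (excluded_middle_informative (t = t)); auto. contradiction. }
      specialize (Hl p Sp). lia. }
    exists S', (t :: Rt). split; [intros x Hx; apply H1; auto|split; auto].
    intros p q Sp Sq Hne y. specialize (H3 p q Sp Sq Hne y).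
    rewrite !filter_In in H3. simpl. unfold neqb in H3.
    destruct (excluded_middle_informative (y = t)) as [->|Nt].
    + split; auto. intros _. split; [apply (H1 p Sp) | apply (H1 q Sq)].
    + split.
      * intros [A B]. right. apply H3. auto.
      * intros [E|I]. congruence. apply H3 in I. destruct I as [[A _] [B _]]. auto.
Qed.

Lemma delta X Y (S : X -> Prop) (tg : X -> list Y) : unc S ->
  exists S' Rt, (forall x, S' x -> S x) /\ unc S' /\
   (forall p q, S' p -> S' q -> p <> q -> forall y, (In y (tg p) /\ In y (tg q)) <-> In y Rt).
Proof.
  intros U.
  assert (Hc : cnt (fun y => exists x, S x /\ length (tg x) = y)).
  { apply cnt_sub with (D := fun _ => True). auto. exact cnt_all_nat. }
  destruct (PH (fun p => length (tg p)) U Hc) as [x0 [_ U0]].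
  destruct (@delta_n X Y (length (tg x0)) _ tg U0) as [S' [Rt [H1 [H2 H3]]]].
  { intros p [_ E]. lia. }
  exists S', Rt. split; [intros x Hx; apply H1; auto|auto].
Qed.

End Delta.


Arguments TL {W L}. Arguments TM {W L}. Arguments TT {W L}.
Arguments LW {W}. Arguments Lom1 {W}. Arguments Lom1p1 {W}.
Arguments BS {L}. Arguments BZ {L}.

Definition bdec (P : Prop) : bool := if excluded_middle_informative P then true else false.
Lemma bdec_true P : bdec P = true <-> P.
Proof. unfold bdec. destruct (excluded_middle_informative P); split; auto; discriminate. Qed.

Section Amal.
Variables (W : Type) (ltW : W -> W -> Prop) (L : Type) (F : L -> L -> W).
Hypothesis Hw : is_omega1 ltW.
Hypothesis HF : forall a b, F a b = F b a.

Notation cond := (cond W L).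
Notation T := (T W L).
Notation inP := (in_P ltW F).

Section Parts.
Variable c : cond.
Hypothesis Hc : inP c.
Lemma Pdom x y : cR c x y -> In x (cX c) /\ In y (cX c). Proof. apply Hc. Qed.
Lemma Prefl x : In x (cX c) -> cR c x x. Proof. apply Hc. Qed.
Lemma Pantisym x y : cR c x y -> cR c y x -> x = y. Proof. apply Hc. Qed.
Lemma Ptrans x y z : cR c x y -> cR c y z -> cR c x z. Proof. apply Hc. Qed.
Lemma Plev x y : strictR c x y -> ltLev ltW (lev x) (lev y). Proof. apply Hc. Qed.
Lemma P3 x z : In x (cX c) -> piB x = BZ z -> In (TT z) (cX c). Proof. apply Hc. Qed.
Lemma P4 z n : In (TM z n) (cX c) -> strictR c (TM z n) (TT z) /\
     forall xi, xi <> z -> In (TT xi) (cX c) -> ~ strictR c (TM z n) (TT xi). Proof. apply Hc. Qed.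
Lemma P5 s t : In s (cX c) -> In t (cX c) -> s <> t -> piB s = piB t ->
     lev s = lev t -> forall u, ~ In u (cI c s t). Proof. apply Hc. Qed.
Lemma P6 t s a : In t (cX c) -> is_succ_lev ltW a (lev t) -> strictR c s t ->
     exists v, In v (cX c) /\ lev v = a /\ cR c s v /\ strictR c v t. Proof. apply Hc. Qed.
Lemma P7s x y : In x (cX c) -> In y (cX c) -> x <> y ->
     sameset (cI c x y) (cI c y x) /\ (forall u, In u (cI c x y) -> In u (cX c)). Proof. apply Hc. Qed.
Lemma P7st x y : strictR c x y -> sameset (cI c x y) [x]. Proof. apply Hc. Qed.
Lemma P7a x y : In x (cX c) -> In y (cX c) -> ~ cR c x y -> ~ cR c y x ->
     (forall u, In u (cX c) -> (cR c u x /\ cR c u y <-> exists v, In v (cI c x y) /\ cR c u v)).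
Proof. intros Hx Hy N1 N2. destruct Hc as (_&_&_&_&_&_&_&_&_&_&_&H12). apply (H12 x y Hx Hy N1 N2). Qed.
Lemma P7b x y : In x (cX c) -> In y (cX c) -> ~ cR c x y -> ~ cR c y x ->
     (forall z xi, (lev x = Lom1 \/ lev x = Lom1p1) -> (lev y = Lom1 \/ lev y = Lom1p1) ->
        piB x = BZ z -> piB y = BZ xi -> z <> xi ->
        forall v, In v (cI c x y) -> lev_below ltW (lev v) (F z xi)).
Proof. intros Hx Hy N1 N2. destruct Hc as (_&_&_&_&_&_&_&_&_&_&_&H12). apply (H12 x y Hx Hy N1 N2). Qed.
End Parts.
Arguments Pdom [c] Hc [x y]. Arguments Prefl [c] Hc [x]. Arguments Pantisym [c] Hc [x y].
Arguments Ptrans [c] Hc [x y z]. Arguments Plev [c] Hc [x y]. Arguments P3 [c] Hc [x z].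
Arguments P4 [c] Hc [z n]. Arguments P5 [c] Hc [s t]. Arguments P6 [c] Hc [t s a].
Arguments P7s [c] Hc [x y]. Arguments P7st [c] Hc [x y]. Arguments P7a [c] Hc [x y] _ _ _ _ [u].
Arguments P7b [c] Hc [x y].

Lemma ltLev_trans a b d : ltLev ltW a b -> ltLev ltW b d -> ltLev ltW a d.
Proof. destruct a, b, d; simpl; auto; try tauto. apply lt_trans; auto. Qed.
Lemma ltLev_irr a : ~ ltLev ltW a a.
Proof. destruct a; simpl; auto. apply lt_irrefl; auto. Qed.
Definition leLev a b := ltLev ltW a b \/ a = b.
Lemma le_lt_Lev a b d : leLev a b -> ltLev ltW b d -> ltLev ltW a d.
Proof. intros [H|<-] H2; auto. eapply ltLev_trans; eauto. Qed.
Lemma lt_le_Lev a b d : ltLev ltW a b -> leLev b d -> ltLev ltW a d.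
Proof. intros H [H2|<-]; auto. eapply ltLev_trans; eauto. Qed.
Lemma leLev_trans a b d : leLev a b -> leLev b d -> leLev a d.
Proof. intros [H|<-] H2; auto. left. eapply lt_le_Lev; eauto. Qed.
Lemma Rle c x y : inP c -> cR c x y -> leLev (lev x) (lev y).
Proof. intros Hc H. destruct (classic (x = y)) as [<-|N]. right; auto. left. apply (Plev Hc). split; auto. Qed.
Arguments Rle [c x y].
Lemma below_mono a b d : leLev a b -> lev_below ltW b d -> lev_below ltW a d.
Proof.
  intros [H|<-] H2; auto. destruct a, b; simpl in *; try tauto. eapply lt_trans; eauto.
Qed.

Notation inR p q x := (In x (cX p) /\ In x (cX q)).
Definition Rr (p q : cond) x y := cR p x y \/ cR q x y \/
   (exists r, inR p q r /\ cR p x r /\ cR q r y) \/ (exists r, inR p q r /\ cR q x r /\ cR p r y).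
Definition Agree (p q : cond) :=
  (forall x y, inR p q x -> inR p q y -> (cR p x y <-> cR q x y)) /\
  (forall x y, inR p q x -> inR p q y -> x <> y -> sameset (cI p x y) (cI q x y)).

Lemma inR_sym (p q : cond) x : inR p q x -> inR q p x.
Proof. tauto. Qed.
Lemma Rr_sym p q x y : Rr p q x y -> Rr q p x y.
Proof.
  unfold Rr. intros [H|[H|[[r [R1 [R2 R3]]]|[r [R1 [R2 R3]]]]]]; auto.
  - right; right; right. exists r. split; auto. apply inR_sym; auto.
  - right; right; left. exists r. split; auto. apply inR_sym; auto.
Qed.
Lemma Agree_sym p q : Agree p q -> Agree q p.
Proof.
  intros [A1 A2]. split.
  - intros x y Hx Hy. symmetry. apply A1; apply inR_sym; auto.
  - intros x y Hx Hy N u. symmetry. apply A2; auto; apply inR_sym; auto.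
Qed.

Section Sides.
Variables p q : cond.
Hypotheses (Pp : inP p) (Pq : inP q) (Ag : Agree p q).

Lemma agR x y : inR p q x -> inR p q y -> cR q x y -> cR p x y.
Proof. intros. apply Ag; auto. Qed.
Lemma agR' x y : inR p q x -> inR p q y -> cR p x y -> cR q x y.
Proof. intros. apply Ag; auto. Qed.

Lemma Rr_restr x y : In x (cX p) -> In y (cX p) -> Rr p q x y -> cR p x y.
Proof.
  intros Hx Hy; unfold Rr; intros [H|[H|[[r [R1 [R2 R3]]]|[r [R1 [R2 R3]]]]]]; auto.
  - destruct (Pdom Pq H). apply agR; try split; auto.
  - destruct (Pdom Pq R3). apply (Ptrans Pp (y:=r)); auto. apply agR; auto; split; auto.
  - destruct (Pdom Pq R2). apply (Ptrans Pp (y:=r)); auto. apply agR; auto; split; auto.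
Qed.

Lemma Rr_dom x y : Rr p q x y -> In x (cX p ++ cX q) /\ In y (cX p ++ cX q).
Proof.
  unfold Rr; intros [H|[H|[[r [R1 [R2 R3]]]|[r [R1 [R2 R3]]]]]].
  - destruct (Pdom Pp H). split; apply in_or_app; auto.
  - destruct (Pdom Pq H). split; apply in_or_app; auto.
  - destruct (Pdom Pp R2). destruct (Pdom Pq R3). split; apply in_or_app; auto.
  - destruct (Pdom Pq R2). destruct (Pdom Pp R3). split; apply in_or_app; auto.
Qed.

Lemma Rr_le x y : Rr p q x y -> leLev (lev x) (lev y).
Proof.
  unfold Rr; intros [H|[H|[[r [R1 [R2 R3]]]|[r [R1 [R2 R3]]]]]].
  - exact (Rle Pp H).
  - exact (Rle Pq H).
  - eapply leLev_trans; [exact (Rle Pp R2) | exact (Rle Pq R3)].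
  - eapply leLev_trans; [exact (Rle Pq R2) | exact (Rle Pp R3)].
Qed.

Lemma Rr_lev x y : Rr p q x y -> x <> y -> ltLev ltW (lev x) (lev y).
Proof.
  intros H N. unfold Rr in H. destruct H as [H|[H|[[r [R1 [R2 R3]]]|[r [R1 [R2 R3]]]]]].
  - apply (Plev Pp). split; auto.
  - apply (Plev Pq). split; auto.
  - destruct (classic (x = r)) as [<-|N1].
    + apply (Plev Pq). split; auto.
    + eapply lt_le_Lev. apply (Plev Pp). split; eauto. exact (Rle Pq R3).
  - destruct (classic (x = r)) as [<-|N1].
    + apply (Plev Pp). split; auto.
    + eapply lt_le_Lev. apply (Plev Pq). split; eauto. exact (Rle Pp R3).
Qed.

Lemma Rr_antisym x y : Rr p q x y -> Rr p q y x -> x = y.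
Proof.
  intros H1 H2. apply NNPP. intros N. apply (@ltLev_irr (lev x)).
  eapply ltLev_trans; apply Rr_lev; eauto.
Qed.

Lemma Rr_p x y : cR p x y -> Rr p q x y. Proof. unfold Rr; auto. Qed.
Lemma Rr_q x y : cR q x y -> Rr p q x y. Proof. unfold Rr; auto. Qed.
Lemma Rr_c1 r x y : inR p q r -> cR p x r -> cR q r y -> Rr p q x y.
Proof. unfold Rr; intros; right; right; left; eauto. Qed.
Lemma Rr_c2 r x y : inR p q r -> cR q x r -> cR p r y -> Rr p q x y.
Proof. unfold Rr; intros; right; right; right; eauto. Qed.

Lemma Rr_trans x y z : Rr p q x y -> Rr p q y z -> Rr p q x z.
Proof.
  unfold Rr at 1 2.
  intros [H|[H|[[r [R1 [R2 R3]]]|[r [R1 [R2 R3]]]]]] [G|[G|[[s [S1 [S2 S3]]]|[s [S1 [S2 S3]]]]]];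
  try destruct R1 as [R1p R1q]; try destruct S1 as [S1p S1q].
  - apply Rr_p. exact (Ptrans Pp H G).
  - apply Rr_c1 with y; auto. split; [exact (proj2 (Pdom Pp H)) | exact (proj1 (Pdom Pq G))].
  - apply Rr_c1 with s; auto. exact (Ptrans Pp H S2).
  - assert (Yp : In y (cX p)) by exact (proj2 (Pdom Pp H)).
    assert (Yq : In y (cX q)) by exact (proj1 (Pdom Pq S2)).
    apply Rr_p. apply (Ptrans Pp H). apply (Ptrans Pp (y:=s)); auto. apply agR; auto.
  - apply Rr_c2 with y; auto. split; [exact (proj1 (Pdom Pp G)) | exact (proj2 (Pdom Pq H))].
  - apply Rr_q. exact (Ptrans Pq H G).
  - assert (Yq : In y (cX q)) by exact (proj2 (Pdom Pq H)).
    assert (Yp : In y (cX p)) by exact (proj1 (Pdom Pp S2)).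
    apply Rr_q. apply (Ptrans Pq H). apply (Ptrans Pq (y:=s)); auto. apply agR'; auto.
  - apply Rr_c2 with s; auto. exact (Ptrans Pq H S2).
  - assert (Yq : In y (cX q)) by exact (proj2 (Pdom Pq R3)).
    assert (Yp : In y (cX p)) by exact (proj1 (Pdom Pp G)).
    apply Rr_p. apply (Ptrans Pp R2). apply (Ptrans Pp (y:=y)); auto. apply agR; auto.
  - apply Rr_c1 with r; auto. exact (Ptrans Pq R3 G).
  - assert (Yq : In y (cX q)) by exact (proj2 (Pdom Pq R3)).
    assert (Yp : In y (cX p)) by exact (proj1 (Pdom Pp S2)).
    apply Rr_c1 with s; auto. apply (Ptrans Pp R2). apply (Ptrans Pp (y:=y)); auto. apply agR; auto.
  - apply Rr_p. apply (Ptrans Pp R2). apply (Ptrans Pp (y:=s)); auto. apply agR; auto.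
    exact (Ptrans Pq R3 S2).
  - apply Rr_c2 with r; auto. exact (Ptrans Pp R3 G).
  - assert (Yp : In y (cX p)) by exact (proj2 (Pdom Pp R3)).
    assert (Yq : In y (cX q)) by exact (proj1 (Pdom Pq G)).
    apply Rr_q. apply (Ptrans Pq R2). apply (Ptrans Pq (y:=y)); auto. apply agR'; auto.
  - apply Rr_q. apply (Ptrans Pq R2). apply (Ptrans Pq (y:=s)); auto. apply agR'; auto.
    exact (Ptrans Pp R3 S2).
  - assert (Yp : In y (cX p)) by exact (proj2 (Pdom Pp R3)).
    assert (Yq : In y (cX q)) by exact (proj1 (Pdom Pq S2)).
    apply Rr_c2 with s; auto. apply (Ptrans Pq R2). apply (Ptrans Pq (y:=y)); auto. apply agR'; auto.
Qed.

Lemma cross_pq v y : In v (cX p) -> ~ In y (cX p) -> Rr p q v y ->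
  exists r, inR p q r /\ cR p v r /\ cR q r y.
Proof.
  intros Hv Hy; unfold Rr; intros [H|[H|[[r [R1 [R2 R3]]]|[r [R1 [R2 R3]]]]]].
  - exfalso. apply Hy. apply (Pdom Pp H).
  - exists v. destruct (Pdom Pq H). split. split; auto. split; auto. apply Prefl; auto.
  - eauto.
  - exfalso. apply Hy. apply (Pdom Pp R3).
Qed.

Lemma cross_qp u x : In u (cX q) -> ~ In u (cX p) -> In x (cX p) -> Rr p q u x ->
  exists r, inR p q r /\ cR q u r /\ cR p r x.
Proof.
  intros Hu Hu' Hx; unfold Rr; intros [H|[H|[[r [R1 [R2 R3]]]|[r [R1 [R2 R3]]]]]].
  - exfalso. apply Hu'. apply (Pdom Pp H).
  - exists x. destruct (Pdom Pq H). split. split; auto. split; auto. apply Prefl; auto.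
  - exfalso. apply Hu'. apply (Pdom Pp R2).
  - eauto.
Qed.

Lemma side_a x y : In x (cX p) -> In y (cX p) -> ~ Rr p q x y -> ~ Rr p q y x ->
  forall u, In u (cX p ++ cX q) ->
    (Rr p q u x /\ Rr p q u y <-> exists v, In v (cI p x y) /\ Rr p q u v).
Proof.
  intros Hx Hy N1 N2 u Hu.
  assert (M1 : ~ cR p x y) by (intros H; apply N1; left; auto).
  assert (M2 : ~ cR p y x) by (intros H; apply N2; left; auto).
  split.
  - intros [U1 U2].
    destruct (classic (In u (cX p))) as [Hup|Hup].
    + apply Rr_restr in U1; auto. apply Rr_restr in U2; auto.
      destruct (proj1 (P7a Pp Hx Hy M1 M2 Hup) (conj U1 U2)) as [v [V1 V2]].
      exists v. split; auto. left; auto.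
    + assert (Huq : In u (cX q)) by (apply in_app_or in Hu; tauto).
      destruct (@cross_qp u x) as [r1 [Ri1 [A1 B1]]]; auto.
      destruct (@cross_qp u y) as [r2 [Ri2 [A2 B2]]]; auto.
      destruct Ri1 as [Ri1p Ri1q]. destruct Ri2 as [Ri2p Ri2q].
      destruct (classic (cR q r1 r2)) as [C|C].
      * assert (cR p r1 r2) by (apply agR; try split; auto).
        destruct (proj1 (P7a Pp Hx Hy M1 M2 Ri1p) (conj B1 (Ptrans Pp H B2))) as [v [V1 V2]].
        exists v. split; auto. apply Rr_c2 with r1; auto.
      * destruct (classic (cR q r2 r1)) as [C'|C'].
        -- assert (cR p r2 r1) by (apply agR; try split; auto).
           destruct (proj1 (P7a Pp Hx Hy M1 M2 Ri2p) (conj (Ptrans Pp H B1) B2)) as [v [V1 V2]].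
           exists v. split; auto. apply Rr_c2 with r2; auto.
        -- destruct (proj1 (P7a Pq Ri1q Ri2q C C' Huq) (conj A1 A2)) as [w [W1 W2]].
           assert (Nr : r1 <> r2) by (intros E; subst; apply C; apply Prefl; auto).
           destruct (P7s Pq Ri1q Ri2q Nr) as [_ Hs]. assert (Wq : In w (cX q)) by auto.
           assert (Wp : In w (cX p)).
           { apply (P7s Pp Ri1p Ri2p Nr). apply (proj2 Ag r1 r2); auto; split; auto. }
           assert (cR q w r1 /\ cR q w r2) as [D1 D2].
           { apply (P7a Pq Ri1q Ri2q C C' Wq). exists w. split; auto. apply Prefl; auto. }
           assert (E1 : cR p w r1) by (apply agR; try split; auto).
           assert (E2 : cR p w r2) by (apply agR; try split; auto).
           destruct (proj1 (P7a Pp Hx Hy M1 M2 Wp) (conj (Ptrans Pp E1 B1) (Ptrans Pp E2 B2))) as [v [V1 V2]].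
           exists v. split; auto. apply Rr_c2 with w; auto.
  - intros [v [V1 V2]].
    destruct (P7s Pp Hx Hy) as [_ Hsub]. { intros E; subst; apply N1; left; apply Prefl; auto. }
    assert (Hv : In v (cX p)) by auto.
    assert (cR p v x /\ cR p v y) as [A B].
    { apply (P7a Pp Hx Hy M1 M2 Hv). exists v. split; auto. apply Prefl; auto. }
    split; eapply Rr_trans; eauto; left; auto.
Qed.

Lemma Rr_P6 t s a : is_succ_lev ltW a (lev t) -> Rr p q s t -> s <> t ->
  exists v, In v (cX p ++ cX q) /\ lev v = a /\ Rr p q s v /\ Rr p q v t /\ v <> t.
Proof.
  intros Ha H Hne. unfold Rr in H.
  destruct H as [H|[H|[[r [[R1p R1q] [R2 R3]]]|[r [[R1p R1q] [R2 R3]]]]]].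
  - destruct (P6 Pp (proj2 (Pdom Pp H)) Ha (conj H Hne)) as [v [V1 [V2 [V3 [V4 V5]]]]].
    exists v. repeat split; auto. apply in_or_app; auto. apply Rr_p; auto. apply Rr_p; auto.
  - destruct (P6 Pq (proj2 (Pdom Pq H)) Ha (conj H Hne)) as [v [V1 [V2 [V3 [V4 V5]]]]].
    exists v. repeat split; auto. apply in_or_app; auto. apply Rr_q; auto. apply Rr_q; auto.
  - destruct (classic (r = t)) as [<-|Nr].
    + destruct (P6 Pp R1p Ha (conj R2 Hne)) as [v [V1 [V2 [V3 [V4 V5]]]]].
      exists v. repeat split; auto. apply in_or_app; auto. apply Rr_p; auto. apply Rr_p; auto.
    + destruct (P6 Pq (proj2 (Pdom Pq R3)) Ha (conj R3 Nr)) as [v [V1 [V2 [V3 [V4 V5]]]]].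
      exists v. repeat split; auto. apply in_or_app; auto. apply Rr_c1 with r; auto. apply Rr_q; auto.
  - destruct (classic (r = t)) as [<-|Nr].
    + destruct (P6 Pq R1q Ha (conj R2 Hne)) as [v [V1 [V2 [V3 [V4 V5]]]]].
      exists v. repeat split; auto. apply in_or_app; auto. apply Rr_q; auto. apply Rr_q; auto.
    + destruct (P6 Pp (proj2 (Pdom Pp R3)) Ha (conj R3 Nr)) as [v [V1 [V2 [V3 [V4 V5]]]]].
      exists v. repeat split; auto. apply in_or_app; auto. apply Rr_c2 with r; auto. apply Rr_p; auto.
Qed.

Definition H4p (p q : cond) := forall r x y z z', inR p q r -> In x (cX p) -> ~ In x (cX q) ->
  In y (cX q) -> ~ In y (cX p) -> piB x = BZ z -> piB y = BZ z' ->
  (cR q r y \/ cR p r x) -> lev_below ltW (lev r) (F z z').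

Lemma new_b (H4 : H4p p q) x y z z' v : In x (cX p) -> ~ In x (cX q) ->
  In y (cX q) -> ~ In y (cX p) -> piB x = BZ z -> piB y = BZ z' ->
  In v (cX p ++ cX q) -> Rr p q v x -> Rr p q v y -> lev_below ltW (lev v) (F z z').
Proof.
  intros Hx Hx' Hy Hy' Bx By Hv V1 V2.
  destruct (classic (In v (cX p))) as [Vp|Vp].
  - destruct (cross_pq Vp Hy' V2) as [r [Ri [A B]]].
    apply below_mono with (lev r). exact (Rle Pp A). apply (H4 r x y z z' Ri Hx Hx' Hy Hy' Bx By); left; auto.
  - assert (Vq : In v (cX q)) by (apply in_app_or in Hv; tauto).
    destruct (cross_qp Vq Vp Hx V1) as [r [Ri [A B]]].
    apply below_mono with (lev r). exact (Rle Pq A). apply (H4 r x y z z' Ri Hx Hx' Hy Hy' Bx By); right; auto.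
Qed.

End Sides.

Lemma Rr_iff p q x y : Rr p q x y <-> Rr q p x y.
Proof. split; apply Rr_sym. Qed.

Lemma H4p_sym p q : H4p p q -> H4p q p.
Proof.
  intros H r x y z z' Ri Hx Hx' Hy Hy' Bx By D. rewrite HF.
  apply (H r y x z' z); auto. apply inR_sym; auto. tauto.
Qed.

Lemma P4_cross c d r z n xi : inP c -> inP d -> inR c d r -> xi <> z ->
  cR c (TM z n) r -> cR d r (TT xi) -> False.
Proof.
  intros Pc Pd [Rc Rd] Nxz A B.
  destruct (Pdom Pc A) as [Mc _].
  destruct (classic (TM z n = r)) as [E|E].
  - subst r. apply (proj2 (P4 Pd Rd) xi Nxz (proj2 (Pdom Pd B))). split; auto. discriminate.
  - pose proof (Plev Pc (conj A E)) as Lv.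
    destruct r as [a m|w m|w]; simpl in Lv; try contradiction.
    destruct (classic (w = z)) as [->|Nwz].
    + destruct (classic (TT z = (TT xi : T))) as [E2|E2].
      * injection E2; auto.
      * pose proof (Plev Pd (conj B E2)) as Lv2. simpl in Lv2. contradiction.
    + apply (proj2 (P4 Pc Mc) w Nwz Rc). split; auto.
Qed.

Definition newI (p q : cond) x y : list T :=
  if excluded_middle_informative (Rr p q x y) then [x]
  else if excluded_middle_informative (Rr p q y x) then [y]
  else filter (fun u => bdec (Rr p q u x /\ Rr p q u y)) (cX p ++ cX q).

Definition Ir (p q : cond) x y : list T :=
  if excluded_middle_informative (In x (cX p) /\ In y (cX p)) then cI p x y
  else if excluded_middle_informative (In x (cX q) /\ In y (cX q)) then cI q x y
  else newI p q x y.

Definition amal (p q : cond) : cond := mkCond (cX p ++ cX q) (Rr p q) (Ir p q).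


Definition SideOK (Rel : T -> T -> Prop) (X : list T) (I : T -> T -> list T) (x y : T) : Prop :=
 (piB x = piB y -> lev x = lev y -> forall u, ~ In u (I x y)) /\
 (sameset (I x y) (I y x) /\ forall u, In u (I x y) -> In u X) /\
 (Rel x y -> sameset (I x y) [x]) /\
 (~ Rel x y -> ~ Rel y x -> forall u, In u X -> (Rel u x /\ Rel u y <-> exists v, In v (I x y) /\ Rel u v)) /\
 (~ Rel x y -> ~ Rel y x -> forall z xi, piB x = BZ z -> piB y = BZ xi -> z <> xi ->
     forall v, In v (I x y) -> lev_below ltW (lev v) (F z xi)).

Lemma SideOK_ext Rel Rel' X X' I I' x y :
  (forall a b, Rel a b <-> Rel' a b) -> (forall u, In u X <-> In u X') ->
  sameset (I x y) (I' x y) -> sameset (I y x) (I' y x) -> SideOK Rel X I x y -> SideOK Rel' X' I' x y.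
Proof.
  intros HR HX S1 S2 [A [[B1 B2] [C [D E]]]]. split; [|split; [split|split; [|split]]].
  - intros e1 e2 u Hu. apply (A e1 e2 u). apply S1; auto.
  - intros u. rewrite <- (S1 u), <- (S2 u). apply B1.
  - intros u Hu. apply HX, B2, S1; auto.
  - intros H u. rewrite <- (S1 u). apply C. apply HR; auto.
  - intros N1 N2 u Hu. rewrite <- !HR.
    rewrite (D (fun H => N1 (proj1 (HR _ _) H)) (fun H => N2 (proj1 (HR _ _) H)) u (proj2 (HX u) Hu)).
    split; intros [v [V1 V2]]; exists v; split; try apply S1; auto; apply HR; auto.
  - intros N1 N2 z xi Bx By Nz v Hv.
    apply (E (fun H => N1 (proj1 (HR _ _) H)) (fun H => N2 (proj1 (HR _ _) H)) z xi Bx By Nz v).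
    apply S1; auto.
Qed.

Lemma hi_lev (x : T) z : piB x = BZ z -> lev x = Lom1 \/ lev x = Lom1p1.
Proof. destruct x; simpl; auto; discriminate. Qed.

Lemma app_comm_in (l1 l2 : list T) u : In u (l1 ++ l2) <-> In u (l2 ++ l1).
Proof. split; intros H; apply in_app_or in H; apply in_or_app; tauto. Qed.

Lemma sameset_refl (l : list T) : sameset l l.
Proof. intros u; tauto. Qed.
Lemma sameset_sym (l m : list T) : sameset l m -> sameset m l.
Proof. intros H u; rewrite (H u); tauto. Qed.
Lemma sameset_trans (l m k : list T) : sameset l m -> sameset m k -> sameset l k.
Proof. intros H G u; rewrite (H u); auto. Qed.

Lemma side_p (p q : cond) (Pp : inP p) (Pq : inP q) (Ag : Agree p q) x y : In x (cX p) -> In y (cX p) -> x <> y ->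
  SideOK (Rr p q) (cX p ++ cX q) (cI p) x y.
Proof.
  intros Hx Hy N. split; [|split; [split|split; [|split]]].
  - intros e1 e2. apply (P5 Pp); auto.
  - apply (P7s Pp); auto.
  - intros u Hu. apply in_or_app. left. apply (P7s Pp Hx Hy N); auto.
  - intros H. apply (P7st Pp). split; auto. apply (Rr_restr Pp Pq Ag); auto.
  - intros N1 N2 u Hu. apply (side_a Pp Pq Ag); auto.
  - intros N1 N2 z xi Bx By Nz v Hv.
    apply (P7b Pp Hx Hy (fun H => N1 (@Rr_p p q _ _ H)) (fun H => N2 (@Rr_p p q _ _ H)) z xi (@hi_lev x z Bx) (@hi_lev y xi By) Bx By Nz v Hv).
Qed.

Section Assembly.
Variables p q : cond.
Hypotheses (Pp : inP p) (Pq : inP q) (Ag : Agree p q).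

Lemma Rr_refl x : In x (cX p ++ cX q) -> Rr p q x x.
Proof.
  intros H. apply in_app_or in H. destruct H as [H|H].
  apply Rr_p. apply (Prefl Pp); auto. apply Rr_q. apply (Prefl Pq); auto.
Qed.

Definition H3p := forall s t, In s (cX p) -> ~ In s (cX q) -> In t (cX q) -> ~ In t (cX p) ->
   piB s = piB t -> lev s = lev t -> False.
Hypotheses (H3 : H3p) (H4 : H4p p q).

Lemma new_ok x y :
  (In x (cX p) /\ ~ In x (cX q) /\ In y (cX q) /\ ~ In y (cX p)) \/
  (In x (cX q) /\ ~ In x (cX p) /\ In y (cX p) /\ ~ In y (cX q)) ->
  SideOK (Rr p q) (cX p ++ cX q) (newI p q) x y.
Proof.
  intros Hn.
  assert (Hx : In x (cX p ++ cX q)) by (apply in_or_app; tauto).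
  assert (Hy : In y (cX p ++ cX q)) by (apply in_or_app; tauto).
  assert (Nxy : x <> y) by (intros <-; tauto).
  split; [|split; [split|split; [|split]]].
  - intros e1 e2. exfalso. destruct Hn as [(A&B&C&D)|(A&B&C&D)].
    + apply (H3 x y A B C D e1 e2).
    + apply (H3 y x C D A B); auto.
  - intros u. unfold newI.
    destruct (excluded_middle_informative (Rr p q x y)) as [R1|R1];
    destruct (excluded_middle_informative (Rr p q y x)) as [R2|R2].
    + exfalso. apply Nxy. apply (Rr_antisym Pp Pq); auto.
    + tauto.
    + tauto.
    + rewrite !filter_In, !bdec_true. tauto.
  - intros u. unfold newI.
    destruct (excluded_middle_informative (Rr p q x y)) as [R1|R1].
    + intros [<-|[]]; auto.
    + destruct (excluded_middle_informative (Rr p q y x)) as [R2|R2].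
      * intros [<-|[]]; auto.
      * rewrite filter_In. tauto.
  - intros H. unfold newI. destruct (excluded_middle_informative (Rr p q x y)); [|contradiction].
    apply sameset_refl.
  - intros N1 N2 u Hu. unfold newI.
    destruct (excluded_middle_informative (Rr p q x y)); [contradiction|].
    destruct (excluded_middle_informative (Rr p q y x)); [contradiction|].
    split.
    + intros [A B]. exists u. rewrite filter_In, bdec_true. split; auto. apply Rr_refl; auto.
    + intros [v [V1 V2]]. rewrite filter_In, bdec_true in V1. destruct V1 as [_ [A B]].
      split; eapply (Rr_trans Pp Pq Ag); eauto.
  - intros N1 N2 z xi Bx By Nz v. unfold newI.
    destruct (excluded_middle_informative (Rr p q x y)); [contradiction|].
    destruct (excluded_middle_informative (Rr p q y x)); [contradiction|].
    rewrite filter_In, bdec_true. intros [Hv [A B]].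
    destruct Hn as [(a&b&c&d)|(a&b&c&d)].
    + eapply (new_b Pp Pq H4); eauto.
    + apply (@new_b q p Pq Pp (H4p_sym H4) x y z xi v a b c d Bx By).
      apply app_comm_in; auto. apply Rr_sym; auto. apply Rr_sym; auto.
Qed.

Lemma Ir_ok x y : In x (cX p ++ cX q) -> In y (cX p ++ cX q) -> x <> y ->
  SideOK (Rr p q) (cX p ++ cX q) (Ir p q) x y.
Proof.
  intros Hx Hy N.
  destruct (classic (In x (cX p) /\ In y (cX p))) as [[Xp Yp]|NP].
  - apply SideOK_ext with (Rr p q) (cX p ++ cX q) (cI p); try tauto; try apply side_p; auto.
    + intros u. unfold Ir. destruct (excluded_middle_informative (In x (cX p) /\ In y (cX p))); tauto.
    + intros u. unfold Ir. destruct (excluded_middle_informative (In y (cX p) /\ In x (cX p))); tauto.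
  - destruct (classic (In x (cX q) /\ In y (cX q))) as [[Xq Yq]|NQ].
    + apply SideOK_ext with (Rr q p) (cX q ++ cX p) (cI q).
      * intros a b. apply Rr_iff.
      * intros u. apply app_comm_in.
      * intros u. unfold Ir. destruct (excluded_middle_informative (In x (cX p) /\ In y (cX p))); [tauto|].
        destruct (excluded_middle_informative (In x (cX q) /\ In y (cX q))); tauto.
      * intros u. unfold Ir. destruct (excluded_middle_informative (In y (cX p) /\ In x (cX p))); [tauto|].
        destruct (excluded_middle_informative (In y (cX q) /\ In x (cX q))); tauto.
      * apply (@side_p q p Pq Pp (Agree_sym Ag)); auto.
    + apply SideOK_ext with (Rr p q) (cX p ++ cX q) (newI p q); try tauto.
      * intros u. unfold Ir. destruct (excluded_middle_informative (In x (cX p) /\ In y (cX p))); [tauto|].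
        destruct (excluded_middle_informative (In x (cX q) /\ In y (cX q))); tauto.
      * intros u. unfold Ir. destruct (excluded_middle_informative (In y (cX p) /\ In x (cX p))); [tauto|].
        destruct (excluded_middle_informative (In y (cX q) /\ In x (cX q))); tauto.
      * apply new_ok. apply in_app_or in Hx. apply in_app_or in Hy. tauto.
Qed.

Lemma amal_ok : inP (amal p q) /\ extends (amal p q) p /\ extends (amal p q) q.
Proof.
  split; [|split].
  - unfold in_P, amal, strictR; simpl.
    split; [|split; [|split; [|split; [|split; [|split; [|split; [|split; [|split; [|split; [|split]]]]]]]]]].
    + intros x y H. apply (Rr_dom Pp Pq); auto.
    + intros x H. apply Rr_refl; auto.
    + intros x y H G. apply (Rr_antisym Pp Pq); auto.
    + intros x y z H G. eapply (Rr_trans Pp Pq Ag); eauto.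
    + intros x y [H N]. apply (Rr_lev Pp Pq); auto.
    + intros x z Hx Bz. apply in_app_or in Hx. apply in_or_app. destruct Hx as [Hx|Hx].
      left; apply (P3 Pp Hx Bz). right; apply (P3 Pq Hx Bz).
    + intros z n H. split.
      * apply in_app_or in H. destruct H as [H|H].
        -- destruct (proj1 (P4 Pp H)) as [A B]. split; auto. apply Rr_p; auto.
        -- destruct (proj1 (P4 Pq H)) as [A B]. split; auto. apply Rr_q; auto.
      * intros xi Nxi Hxi [R N]. unfold Rr in R.
        destruct R as [R|[R|[[r [Ri [A B]]]|[r [Ri [A B]]]]]].
        -- destruct (Pdom Pp R) as [R1 R2]. apply (proj2 (P4 Pp R1) xi Nxi R2). split; auto.
        -- destruct (Pdom Pq R) as [R1 R2]. apply (proj2 (P4 Pq R1) xi Nxi R2). split; auto.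
        -- apply (@P4_cross p q r z n xi Pp Pq Ri Nxi A B).
        -- apply (@P4_cross q p r z n xi Pq Pp (inR_sym p q r Ri) Nxi A B).
    + intros s t Hs Ht N e1 e2. apply (Ir_ok Hs Ht N); auto.
    + intros t s a Ht Ha [R N].
      destruct (Rr_P6 Pp Pq Ha R N) as [v [V1 [V2 [V3 [V4 V5]]]]].
      exists v. repeat split; auto.
    + intros x y Hx Hy N. apply (Ir_ok Hx Hy N).
    + intros x y [R N]. destruct (Rr_dom Pp Pq R) as [Hx Hy]. apply (Ir_ok Hx Hy N); auto.
    + intros x y Hx Hy N1 N2.
      assert (N : x <> y) by (intros <-; apply N1; apply Rr_refl; auto).
      split.
      * apply (Ir_ok Hx Hy N); auto.
      * intros z xi _ _ Bx By Nz v Hv. apply (Ir_ok Hx Hy N) with (z := z) (xi := xi); auto.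
  - split; [|split]; simpl.
    + intros x H. apply in_or_app; auto.
    + intros x y Hx Hy. split. apply Rr_p. apply (Rr_restr Pp Pq Ag); auto.
    + intros x y Hx Hy N u. unfold Ir.
      destruct (excluded_middle_informative (In x (cX p) /\ In y (cX p))); tauto.
  - split; [|split]; simpl.
    + intros x H. apply in_or_app; auto.
    + intros x y Hx Hy. split. apply Rr_q.
      intros R. apply (Rr_restr Pq Pp (Agree_sym Ag)); auto. apply Rr_sym; auto.
    + intros x y Hx Hy N u. unfold Ir.
      destruct (excluded_middle_informative (In x (cX p) /\ In y (cX p))) as [[A B]|A].
      * apply (proj2 Ag); auto.
      * destruct (excluded_middle_informative (In x (cX q) /\ In y (cX q))); tauto.
Qed.
End Assembly.

End Amal.
Arguments Pdom {W ltW L F c} Hc {x y}. Arguments Prefl {W ltW L F c} Hc {x}. Arguments Pantisym {W ltW L F c} Hc {x y}.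
Arguments Ptrans {W ltW L F c} Hc {x y z}. Arguments Plev {W ltW L F c} Hc {x y}. Arguments P3 {W ltW L F c} Hc {x z}.
Arguments P4 {W ltW L F c} Hc {z n}. Arguments P5 {W ltW L F c} Hc {s t}. Arguments P6 {W ltW L F c} Hc {t s a}.
Arguments P7s {W ltW L F c} Hc {x y}. Arguments P7st {W ltW L F c} Hc {x y}. Arguments P7a {W ltW L F c} Hc {x y} _ _ _ _ {u}.
Arguments P7b {W ltW L F c} Hc {x y}.
Arguments Rle {W ltW L F c x y}.


Fixpoint dd {A : Type} (l : list A) : list A :=
  match l with
  | [] => []
  | a :: l => if excluded_middle_informative (In a l) then dd l else a :: dd l
  end.
Lemma dd_In A (l : list A) x : In x (dd l) <-> In x l.
Proof.
  induction l as [|a l IH]; simpl; [tauto|].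
  destruct (excluded_middle_informative (In a l)); simpl; rewrite IH; split; try tauto.
  intros [<-|H]; auto.
Qed.
Lemma dd_NoDup A (l : list A) : NoDup (dd l).
Proof.
  induction l as [|a l IH]; simpl. constructor.
  destruct (excluded_middle_informative (In a l)); auto. constructor; auto. rewrite dd_In; auto.
Qed.

Lemma map_eq_in A B (f g : A -> B) l : map f l = map g l -> forall a, In a l -> f a = g a.
Proof.
  induction l as [|b l IH]; simpl; intros E a H; [contradiction|].
  injection E as E1 E2. destruct H as [<-|H]; auto.
Qed.
Lemma bdec_eq P Q : bdec P = bdec Q -> (P <-> Q).
Proof.
  unfold bdec. destruct (excluded_middle_informative P), (excluded_middle_informative Q); try discriminate; tauto.
Qed.

Section Main.
Variables (W : Type) (ltW : W -> W -> Prop) (L : Type) (F : L -> L -> W).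
Hypothesis Hw : is_omega1 ltW.
Hypothesis HF : forall a b, F a b = F b a.
Hypothesis SU : strongly_unbounded ltW F.
Notation cond := (cond W L).
Notation T := (T W L).
Notation inP := (in_P ltW F).

Definition tag (x : T) : L + W :=
  match x with TL a _ => inr a | TM z _ => inl z | TT z => inl z end.
Definition tg (p : cond) := map tag (cX p).
Definition lefts (l : list (L + W)) : list L :=
  flat_map (fun t => match t with inl z => [z] | inr _ => [] end) l.
Definition rights (l : list (L + W)) : list W :=
  flat_map (fun t => match t with inl _ => [] | inr a => [a] end) l.
Lemma lefts_In l z : In z (lefts l) <-> In (inl z) l.
Proof.
  unfold lefts. rewrite in_flat_map. split.
  - intros [[w|w] [H1 H2]]; simpl in H2; [destruct H2 as [<-|[]]; auto | contradiction].
  - intros H. exists (inl z). simpl; auto.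
Qed.
Lemma rights_In l a : In a (rights l) <-> In (inr a) l.
Proof.
  unfold rights. rewrite in_flat_map. split.
  - intros [[w|w] [H1 H2]]; simpl in H2; [contradiction | destruct H2 as [<-|[]]; auto].
  - intros H. exists (inr a). simpl; auto.
Qed.

Section Fixed.
Variable Rt : list (L + W).
Variable rho : W.
Definition Zr := lefts Rt.
Definition inC (x : T) : Prop :=
  match x with TL a _ => leW ltW a rho | TM z _ => In z Zr | TT z => In z Zr end.
Hypothesis Hrho1 : forall a, In (inr a) Rt -> leW ltW a rho.
Hypothesis Hrho2 : forall z z', In z Zr -> In z' Zr -> leW ltW (F z z') rho.

Lemma inC_cnt : cnt inC.
Proof.
  apply cnt_sub with (D := fun x => ((exists pr, (leW ltW (fst pr) rho /\ True) /\ TL (fst pr) (snd pr) = x) \/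
                                    (exists pr, (In (fst pr) Zr /\ True) /\ TM (fst pr) (snd pr) = x)) \/
                                    (exists z, In z Zr /\ TT z = x)).
  - intros [a n|z n|z] H; simpl in H.
    + left; left. exists (a, n). simpl; auto.
    + left; right. exists (z, n). simpl; auto.
    + right. exists z; auto.
  - apply cnt_union2. apply cnt_union2.
    + apply cnt_image with (f := fun pr => TL (fst pr) (snd pr)).
      exact (@cnt_prod W nat (fun a => leW ltW a rho) (fun _ => True) (leW_cnt Hw rho) cnt_all_nat).
    + apply cnt_image with (f := fun pr => TM (fst pr) (snd pr)).
      exact (@cnt_prod L nat (fun z => In z Zr) (fun _ => True) (cnt_inlist _) cnt_all_nat).
    + apply cnt_image. apply cnt_inlist.
Qed.

Lemma iC c x y u : inP c -> In x (cX c) -> In y (cX c) -> inC x -> inC y -> x <> y ->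
  In u (cI c x y) -> inC u.
Proof.
  intros Pc Hx Hy Cx Cy N Hu.
  destruct (classic (cR c x y)) as [R|R].
  - apply (P7st Pc (conj R N)) in Hu. destruct Hu as [<-|[]]; auto.
  - destruct (classic (cR c y x)) as [R'|R'].
    + apply (proj1 (P7s Pc Hx Hy N) u) in Hu. apply (P7st Pc (conj R' (fun E => N (eq_sym E)))) in Hu.
      destruct Hu as [<-|[]]; auto.
    + assert (Uc : In u (cX c)) by (apply (P7s Pc Hx Hy N); auto).
      assert (cR c u x /\ cR c u y) as [A B].
      { apply (P7a Pc Hx Hy R R' Uc). exists u. split; auto. apply (Prefl Pc); auto. }
      assert (Hlow : forall v, cR c u v -> inC v -> (exists a n, v = TL a n) -> inC u).
      { intros v Rv Cv [a [n ->]]. pose proof (Rle Pc Rv) as Le. simpl in Cv.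
        destruct u as [b m|w m|w]; simpl in Le; destruct Le as [Le|Le]; try contradiction; try discriminate.
        - simpl. apply le_trans with a; auto. left; auto.
        - injection Le as ->. simpl. auto. }
      assert (Hb : forall z z', z <> z' -> In z Zr -> In z' Zr -> piB x = BZ z -> piB y = BZ z' -> inC u).
      { intros z z' Nz Z1 Z2 Bx By.
        pose proof (P7b Pc Hx Hy R R' z z' (hi_lev _ Bx) (hi_lev _ By) Bx By Nz u Hu) as Hl.
        destruct u as [b m|w m|w]; simpl in Hl; try contradiction. simpl.
        apply le_trans with (F z z'); auto. left; auto. }
      destruct x as [a n|z n|z].
      * exact (Hlow _ A Cx (ex_intro _ a (ex_intro _ n eq_refl))).
      * destruct y as [a' n'|z' n'|z'].
        -- exact (Hlow _ B Cy (ex_intro _ a' (ex_intro _ n' eq_refl))).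
        -- destruct (classic (z = z')) as [<-|Nz].
           ++ exfalso. apply (P5 Pc Hx Hy N eq_refl eq_refl u Hu).
           ++ apply (Hb z z'); auto.
        -- destruct (classic (z = z')) as [<-|Nz].
           ++ exfalso. apply R. apply (proj1 (P4 Pc Hx)).
           ++ apply (Hb z z'); auto.
      * destruct y as [a' n'|z' n'|z'].
        -- exact (Hlow _ B Cy (ex_intro _ a' (ex_intro _ n' eq_refl))).
        -- destruct (classic (z = z')) as [<-|Nz].
           ++ exfalso. apply R'. apply (proj1 (P4 Pc Hy)).
           ++ apply (Hb z z'); auto.
        -- destruct (classic (z = z')) as [<-|Nz].
           ++ exfalso. apply N; auto.
           ++ apply (Hb z z'); auto.
Qed.


Definition inCb (x : T) := bdec (inC x).
Definition Kof (p : cond) := filter inCb (cX p).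
Definition gl (p : cond) := dd (filter (fun z => negb (bdec (In z Zr))) (lefts (tg p))).
Lemma gl_In p z : In z (gl p) <-> In (inl z) (tg p) /\ ~ In z Zr.
Proof.
  unfold gl. rewrite dd_In, filter_In, lefts_In. unfold bdec.
  destruct (excluded_middle_informative (In z Zr)); simpl; split; intros [A B]; try discriminate; try contradiction; auto.
Qed.
Lemma Kof_In p x : In x (Kof p) <-> In x (cX p) /\ inC x.
Proof. unfold Kof, inCb. rewrite filter_In, bdec_true. tauto. Qed.
Lemma tag_In p x : In x (cX p) -> In (tag x) (tg p).
Proof. intros H. unfold tg. apply in_map; auto. Qed.

Definition relbits (p : cond) (K : list T) := map (fun xy => bdec (cR p (fst xy) (snd xy))) (list_prod K K).
Definition ibits (p : cond) (K : list T) :=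
  map (fun xyu => bdec (In (snd xyu) (cI p (fst (fst xyu)) (snd (fst xyu))))) (list_prod (list_prod K K) K).

Lemma compat_pair p q : inP p -> inP q ->
  Kof p = Kof q ->
  (forall y, (In y (tg p) /\ In y (tg q)) <-> In y Rt) ->
  relbits p (Kof p) = relbits q (Kof p) ->
  ibits p (Kof p) = ibits q (Kof p) ->
  (forall z z', In z (gl p) -> In z' (gl q) -> ltW rho (F z z')) ->
  compatible ltW F p q.
Proof.
  intros Pp Pq HK Hroot Hrel Hib Hfc.
  set (K := Kof p) in *.
  assert (Kp : forall x, In x K <-> In x (cX p) /\ inC x) by (intros; apply Kof_In).
  assert (Kq : forall x, In x K <-> In x (cX q) /\ inC x) by (intros; rewrite HK; apply Kof_In).
  assert (Hr : forall x, In x (cX p) -> In x (cX q) -> In x K).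
  { intros x X1 X2. apply Kp. split; auto.
    pose proof (proj1 (Hroot (tag x)) (conj (tag_In _ _ X1) (tag_In _ _ X2))) as H.
    destruct x as [a n|z n|z]; simpl in *; auto; apply lefts_In; auto. }
  assert (Hnew : forall x, In x (cX p) -> ~ In x (cX q) -> ~ inC x).
  { intros x X1 X2 C. apply X2. apply Kq. apply Kp. auto. }
  assert (Hnew' : forall x, In x (cX q) -> ~ In x (cX p) -> ~ inC x).
  { intros x X1 X2 C. apply X2. apply Kp. apply Kq. auto. }
  assert (Ag : Agree p q).
  { split.
    - intros x y [X1 X2] [Y1 Y2].
      apply bdec_eq.
      exact (map_eq_in _ _ _ Hrel (x, y) (proj2 (in_prod_iff K K x y) (conj (Hr _ X1 X2) (Hr _ Y1 Y2)))).
    - intros x y [X1 X2] [Y1 Y2] N u.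
      assert (Cx : inC x) by (apply Kp, Hr; auto). assert (Cy : inC y) by (apply Kp, Hr; auto).
      assert (E : forall u, In u K -> (In u (cI p x y) <-> In u (cI q x y))).
      { intros v Hv. apply bdec_eq.
        exact (map_eq_in _ _ _ Hib ((x, y), v)
          (proj2 (in_prod_iff _ K _ v) (conj (proj2 (in_prod_iff K K x y) (conj (Hr _ X1 X2) (Hr _ Y1 Y2))) Hv))). }
      split; intros Hu.
      + apply E; auto. apply Kp. split. apply (P7s Pp X1 Y1 N); auto. apply (@iC p x y u Pp X1 Y1 Cx Cy N Hu).
      + apply E; auto. apply Kq. split. apply (P7s Pq X2 Y2 N); auto. apply (@iC q x y u Pq X2 Y2 Cx Cy N Hu). }
  assert (H3 : H3p p q).
  { intros s t S1 S2 T1 T2 Eb El.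
    apply (Hnew s S1 S2).
    destruct s as [a n|z n|z]; simpl.
    - destruct t as [a' n'|z' n'|z']; simpl in El; try discriminate. injection El as <-.
      apply Hrho1. apply Hroot. split. exact (tag_In _ _ S1). exact (tag_In _ _ T1).
    - apply lefts_In. apply Hroot. split. exact (tag_In _ _ S1).
      destruct t as [a' n'|z' n'|z']; simpl in Eb; try discriminate; injection Eb as <-; exact (tag_In _ _ T1).
    - apply lefts_In. apply Hroot. split. exact (tag_In _ _ S1).
      destruct t as [a' n'|z' n'|z']; simpl in Eb; try discriminate; injection Eb as <-; exact (tag_In _ _ T1). }
  assert (H4 : H4p ltW F p q).
  { intros r x y z z' [R1 R2] X1 X2 Y1 Y2 Bx By D.
    assert (Gz : In z (gl p)).
    { apply gl_In. split.
      - destruct x as [a n|w n|w]; simpl in Bx; try discriminate; injection Bx as ->; exact (tag_In _ _ X1).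
      - intros Z. apply (Hnew x X1 X2). destruct x as [a n|w n|w]; simpl in Bx; try discriminate; injection Bx as ->; auto. }
    assert (Gz' : In z' (gl q)).
    { apply gl_In. split.
      - destruct y as [a n|w n|w]; simpl in By; try discriminate; injection By as ->; exact (tag_In _ _ Y1).
      - intros Z. apply (Hnew' y Y1 Y2). destruct y as [a n|w n|w]; simpl in By; try discriminate; injection By as ->; auto. }
    pose proof (Hfc z z' Gz Gz') as Hlt.
    assert (Cr : inC r) by (apply Kp, Hr; auto).
    destruct r as [a n|w n|w].
    - simpl. simpl in Cr. eapply le_lt_trans; eauto.
    - exfalso. simpl in Cr.
      destruct D as [D|D].
      + assert (Nry : TM w n <> y) by (intros <-; auto).
        destruct (classic (w = z')) as [<-|Nw].
        * apply (Hnew' y Y1 Y2). destruct y as [a m|w' m|w']; simpl in By; try discriminate; injection By as ->; auto.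
        * pose proof (Plev Pq (conj D Nry)) as Lv.
          destruct y as [a m|w' m|w']; simpl in Lv; try contradiction.
          simpl in By. injection By as ->. apply (proj2 (P4 Pq R2) z' (fun E => Nw (eq_sym E)) Y1). split; auto.
      + assert (Nry : TM w n <> x) by (intros <-; auto).
        destruct (classic (w = z)) as [<-|Nw].
        * apply (Hnew x X1 X2). destruct x as [a m|w' m|w']; simpl in Bx; try discriminate; injection Bx as ->; auto.
        * pose proof (Plev Pp (conj D Nry)) as Lv.
          destruct x as [a m|w' m|w']; simpl in Lv; try contradiction.
          simpl in Bx. injection Bx as ->. apply (proj2 (P4 Pp R1) z (fun E => Nw (eq_sym E)) X1). split; auto.
    - exfalso. simpl in Cr.
      destruct D as [D|D].
      + assert (Nry : TT w <> y) by (intros <-; auto).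
        pose proof (Plev Pq (conj D Nry)) as Lv. destruct y; simpl in Lv; contradiction.
      + assert (Nry : TT w <> x) by (intros <-; auto).
        pose proof (Plev Pp (conj D Nry)) as Lv. destruct x; simpl in Lv; contradiction. }
  destruct (amal_ok Hw HF Pp Pq Ag H3 H4) as [A1 [A2 A3]].
  exists (amal p q). auto.
Qed.

End Fixed.

Lemma cnt_lb : cnt (fun _ : list bool => True).
Proof. apply cnt_sub with (D := fun l => forall x, In x l -> True); auto. apply cnt_list. apply cnt_all_bool. Qed.

Lemma main_false (A : cond -> Prop) : (forall p, A p -> inP p) ->
  (forall p q, A p -> A q -> p <> q -> ~ compatible ltW F p q) -> unc A -> False.
Proof.
  intros HA Hanti UA.
  destruct (delta Hw tg UA) as [S1 [Rt [HS1 [U1 Hd]]]].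
  destruct (upper_bound Hw (rights Rt ++ map (fun zz => F (fst zz) (snd zz)) (list_prod (lefts Rt) (lefts Rt))))
    as [rho Hub].
  assert (Hrho1 : forall a, In (inr a) Rt -> leW ltW a rho).
  { intros a Ha. apply Hub. apply in_or_app. left. apply rights_In; auto. }
  assert (Hrho2 : forall z z', In z (Zr Rt) -> In z' (Zr Rt) -> leW ltW (F z z') rho).
  { intros z z' H1 H2. apply Hub. apply in_or_app. right.
    apply (in_map (fun zz => F (fst zz) (snd zz)) _ (z, z')). apply in_prod; auto. }
  set (col := fun p => (Kof Rt rho p, (relbits p (Kof Rt rho p), (ibits p (Kof Rt rho p), length (gl Rt p))))).
  assert (Hcc : cnt (fun c => exists x, S1 x /\ col x = c)).
  { apply cnt_sub with (D := fun c => (forall x, In x (fst c) -> inC Rt rho x) /\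
                                      (True /\ (True /\ True))).
    - intros c [x [Sx <-]]. simpl. repeat split; auto. intros y Hy. apply Kof_In in Hy. tauto.
    - apply (@cnt_prod _ _ (fun l => forall x, In x l -> inC Rt rho x) (fun _ => True /\ (True /\ True))).
      + apply cnt_list. apply inC_cnt.
      + apply cnt_sub with (D := fun c => True /\ (True /\ True)); auto.
        apply (@cnt_prod (list bool) _ (fun _ => True) (fun _ => True /\ True)). apply cnt_lb.
        apply (@cnt_prod (list bool) nat (fun _ => True) (fun _ => True)). apply cnt_lb. apply cnt_all_nat. }
  destruct (PH col U1 Hcc) as [p0 [S0 U2]].
  set (S2 := fun x => S1 x /\ col x = col p0) in *.
  assert (Key : forall p q, S2 p -> S2 q -> p <> q ->
     (forall z z', In z (gl Rt p) -> In z' (gl Rt q) -> ltW rho (F z z')) -> False).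
  { intros p q [Sp Cp] [Sq Cq] Npq Hfc.
    rewrite <- Cq in Cp. unfold col in Cp. injection Cp as E1 E2 E3 E4.
    apply (Hanti p q (HS1 _ Sp) (HS1 _ Sq) Npq).
    apply (@compat_pair Rt rho Hrho1 Hrho2 p q (HA _ (HS1 _ Sp)) (HA _ (HS1 _ Sq)) E1).
    - intros y. apply Hd; auto.
    - rewrite E2. rewrite E1. reflexivity.
    - rewrite E3. rewrite E1. reflexivity.
    - exact Hfc. }
  assert (Hlen : forall p, S2 p -> length (gl Rt p) = length (gl Rt p0)).
  { intros p [_ Cp]. unfold col in Cp. injection Cp. auto. }
  destruct (Nat.eq_dec (length (gl Rt p0)) 0) as [Z|NZ].
  - assert (S2p0 : S2 p0) by (split; auto).
    destruct (unc_two p0 U2) as [q [Sq Nq]].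
    apply (Key q p0 Sq S2p0 Nq). intros z z' H _.
    pose proof (Hlen q Sq) as Lq. rewrite Z in Lq. destruct (gl Rt q); simpl in *; try discriminate. contradiction.
  - destruct (enum_unc Hw U2) as [e [He1 He2]].
    assert (Disj : forall xi eta, xi <> eta -> forall a, In a (gl Rt (e xi)) -> ~ In a (gl Rt (e eta))).
    { intros xi eta N a H1 H2. apply gl_In in H1. apply gl_In in H2.
      destruct H1 as [H1 Z1]. apply Z1. apply lefts_In.
      apply (Hd (e xi) (e eta) (proj1 (He1 xi)) (proj1 (He1 eta)) (He2 xi eta N)). tauto. }
    pose proof SU as SU'. unfold strongly_unbounded in SU'.
    destruct (SU' rho (length (gl Rt p0)) (fun w => gl Rt (e w))) as [xi [eta [N Hx]]].
    + intros w. split. apply dd_NoDup. apply Hlen; auto.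
    + intros xi eta Hs. cbv beta in Hs. apply NNPP. intros N.
      pose proof (Hlen _ (He1 xi)) as Lx.
      assert (exists a, In a (gl Rt (e xi))) as [a Ha].
      { destruct (gl Rt (e xi)) as [|a l]; [simpl in Lx; lia| exists a; left; auto]. }
      apply (Disj xi eta N a Ha). apply Hs; auto.
    + intros xi eta N. apply Disj; auto.
    + apply (Key (e xi) (e eta) (He1 xi) (He1 eta) (He2 xi eta N)). intros z z' H1 H2. apply Hx; auto.
Qed.
End Main.

Theorem lemma3p9 (W : Type) (ltW : W -> W -> Prop) (L : Type) (F : L -> L -> W) :
  is_omega1 ltW ->
  card_ge_omega3 ltW L ->
  (forall a b, F a b = F b a) ->
  strongly_unbounded ltW F ->
  ccc ltW F.
Proof.
  intros Hw _ HF SU A HA Hanti.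
  apply NNPP. intros N. apply (@main_false W ltW L F Hw HF SU A HA Hanti).
  intros C. apply N. destruct (cnt_to_inj C) as [f Hf]. exists f. intros p q Ap Aq E. apply Hf; auto.
Qed.
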